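(* Let $\mathscr{M}$ be a class of monomorphisms in a cotensored $\mathscr{V}$-category $\mathscr{B}$. Suppose that (i) arbitrary (class-indexed) intersections of $\mathscr{M}$-morphisms exist in $\mathscr{B}$ and again lie in $\mathscr{M}$, (ii) pullbacks of $\mathscr{M}$-morphisms along arbitrary morphisms exist in $\mathscr{B}$ and again lie in $\mathscr{M}$, (iii) $\mathscr{M}$ is closed under composition, and (iv) $\mathscr{M}$ is closed under cotensors. Then $\mathscr{M}^{\uparrow_\mathscr{V}}=\mathscr{M}^{\uparrow}$ and $(\mathscr{M}^{\uparrow},\mathscr{M})$ is a $\mathscr{V}$-factorization-system on $\mathscr{B}$.
   Context: $\mathscr{V}$ is a closed symmetric monoidal category; ordinary categories are not assumed locally small. Monomorphisms, intersections (wide pullbacks of class-indexed families of monos with common codomain) and pullbacks here are ordinary notions in the underlying category of $\mathscr{B}$. For $e:A_1\to A_2$, $m:B_1\to B_2$: $e\downarrow m$ means each commutative square $m\cdot u=v\cdot e$ has a unique diagonal $w$ with $w\cdot e=u$, $m\cdot w=v$; $e\downarrow_\mathscr{V} m$ means the square formed by $\mathscr{B}(A_2,m)$, $\mathscr{B}(A_1,m)$, $\mathscr{B}(e,B_1)$, $\mathscr{B}(e,B_2)$ is a pullback in $\mathscr{V}$. $\mathscr{M}^{\uparrow}$ ($\mathscr{M}^{\uparrow_\mathscr{V}}$) is the class of $e$ with $e\downarrow m$ ($e\downarrow_\mathscr{V} m$) for all $m\in\mathscr{M}$; similarly $\mathscr{E}^{\downarrow_\mathscr{V}}$. A $\mathscr{V}$-factorization-system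 is a pair $(\mathscr{E},\mathscr{M})$ with $\mathscr{E}^{\downarrow_\mathscr{V}}=\mathscr{M}$, $\mathscr{M}^{\uparrow_\mathscr{V}}=\mathscr{E}$, and every morphism assigned a factorization $m\cdot e$, $e\in\mathscr{E}$, $m\in\mathscr{M}$. $\mathscr{M}$ closed under cotensors: $[V,m]\in\mathscr{M}$ for $m\in\mathscr{M}$, $V\in\mathscr{V}$. *)

(* Defs.v *)
Set Implicit Arguments.
Unset Strict Implicit.

Record Cat : Type := {
  ob :> Type;
  hom : ob -> ob -> Type;
  idm : forall a, hom a a;
  cmp : forall a b c, hom b c -> hom a b -> hom a c;
  cmp_idl : forall a b (f : hom a b), cmp (idm b) f = f;
  cmp_idr : forall a b (f : hom a b), cmp f (idm a) = f;
  cmp_assoc : forall a b c d (h : hom c d) (g : hom b c) (f : hom a b),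
      cmp h (cmp g f) = cmp (cmp h g) f }.
Arguments hom {_} _ _.
Arguments idm {_} _.
Arguments cmp {_ _ _ _} _ _.

Notation "g ∘ f" := (cmp g f) (at level 40, left associativity).

Definition is_iso (C : Cat) (a b : C) (f : hom a b) : Prop :=
  exists g : hom b a, g ∘ f = idm a /\ f ∘ g = idm b.

Definition is_pullback (C : Cat) (p a b c : C) (f : hom a c) (g : hom b c)
    (pa : hom p a) (pb : hom p b) : Prop :=
  f ∘ pa = g ∘ pb /\
  forall (q : C) (qa : hom q a) (qb : hom q b), f ∘ qa = g ∘ qb ->
    exists! u : hom q p, pa ∘ u = qa /\ pb ∘ u = qb.

Record SMCC : Type := {
  Vc :> Cat;
  ten : Vc -> Vc -> Vc;
  tenm : forall a b c d, hom a b -> hom c d -> hom (ten a c) (ten b d);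
  tenm_id : forall a c, tenm (idm a) (idm c) = idm (ten a c);
  tenm_cmp : forall a b e c d f (g : hom b e) (g' : hom a b) (h : hom d f) (h' : hom c d),
      tenm (g ∘ g') (h ∘ h') = tenm g h ∘ tenm g' h';
  un : Vc;
  asc : forall a b c, hom (ten (ten a b) c) (ten a (ten b c));
  asc_inv : forall a b c, hom (ten a (ten b c)) (ten (ten a b) c);
  asc_iso1 : forall a b c, asc_inv a b c ∘ asc a b c = idm _;
  asc_iso2 : forall a b c, asc a b c ∘ asc_inv a b c = idm _;
  asc_nat : forall a a' b b' c c' (f : hom a a') (g : hom b b') (h : hom c c'),
      asc a' b' c' ∘ tenm (tenm f g) h = tenm f (tenm g h) ∘ asc a b c;
  lu : forall a, hom (ten un a) a;
  lu_inv : forall a, hom a (ten un a);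
  lu_iso1 : forall a, lu_inv a ∘ lu a = idm _;
  lu_iso2 : forall a, lu a ∘ lu_inv a = idm _;
  lu_nat : forall a b (f : hom a b), lu b ∘ tenm (idm un) f = f ∘ lu a;
  ru : forall a, hom (ten a un) a;
  ru_inv : forall a, hom a (ten a un);
  ru_iso1 : forall a, ru_inv a ∘ ru a = idm _;
  ru_iso2 : forall a, ru a ∘ ru_inv a = idm _;
  ru_nat : forall a b (f : hom a b), ru b ∘ tenm f (idm un) = f ∘ ru a;
  pentagon : forall a b c d,
      tenm (idm a) (asc b c d) ∘ asc a (ten b c) d ∘ tenm (asc a b c) (idm d)
      = asc a b (ten c d) ∘ asc (ten a b) c d;
  triangle : forall a b, tenm (idm a) (lu b) ∘ asc a un b = tenm (ru a) (idm b);
  sym : forall a b, hom (ten a b) (ten b a);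
  sym_nat : forall a a' b b' (f : hom a a') (g : hom b b'),
      sym a' b' ∘ tenm f g = tenm g f ∘ sym a b;
  sym_inv : forall a b, sym b a ∘ sym a b = idm _;
  hexagon : forall a b c,
      asc b c a ∘ sym a (ten b c) ∘ asc a b c
      = tenm (idm b) (sym a c) ∘ asc b a c ∘ tenm (sym a b) (idm c);
  ihom : Vc -> Vc -> Vc;
  ev : forall a b, hom (ten (ihom a b) a) b;
  cur : forall a b c, hom (ten c a) b -> hom c (ihom a b);
  ev_cur : forall a b c (f : hom (ten c a) b), ev a b ∘ tenm (cur f) (idm a) = f;
  cur_uniq : forall a b c (f : hom (ten c a) b) (g : hom c (ihom a b)),
      ev a b ∘ tenm g (idm a) = f -> g = cur f }.
Arguments ten {_} _ _.
Arguments tenm {_ _ _ _ _} _ _.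
Arguments un {_}.
Arguments asc {_} _ _ _.
Arguments lu {_} _.
Arguments lu_inv {_} _.
Arguments ru {_} _.
Arguments ru_inv {_} _.
Arguments sym {_} _ _.
Arguments ihom {_} _ _.
Arguments ev {_} _ _.
Arguments cur {_ _ _ _} _.

Record VCat (V : SMCC) : Type := {
  vob :> Type;
  vhom : vob -> vob -> V;
  vcomp : forall a b c, hom (ten (vhom b c) (vhom a b)) (vhom a c);
  vid : forall a, hom un (vhom a a);
  vassoc : forall a b c d,
      vcomp a b d ∘ tenm (vcomp b c d) (idm _)
      = vcomp a c d ∘ tenm (idm _) (vcomp a b c) ∘ asc _ _ _;
  vunit_l : forall a b, vcomp a b b ∘ tenm (vid b) (idm _) = lu _;
  vunit_r : forall a b, vcomp a a b ∘ tenm (idm _) (vid a) = ru _ }.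
Arguments vhom {_ _} _ _.
Arguments vcomp {_ _} _ _ _.
Arguments vid {_ _} _.

Section Underlying.
Variables (V : SMCC) (B : VCat V).

(** Underlying ordinary category B_0: B_0(a,b) = V_0(I, B(a,b)). *)
Definition uhom (a b : B) : Type := hom (@un V) (vhom a b).
Definition uid (a : B) : uhom a a := vid a.
Definition ucomp (a b c : B) (g : uhom b c) (f : uhom a b) : uhom a c :=
  vcomp a b c ∘ tenm g f ∘ lu_inv un.

Definition postm (a : B) (b1 b2 : B) (m : uhom b1 b2) :
    hom (vhom a b1) (vhom a b2) :=
  vcomp a b1 b2 ∘ tenm m (idm _) ∘ lu_inv _.
Definition prem (a1 a2 : B) (e : uhom a1 a2) (b : B) :
    hom (vhom a2 b) (vhom a1 b) :=
  vcomp a1 a2 b ∘ tenm (idm _) e ∘ ru_inv _.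

Definition is_mono (b c : B) (m : uhom b c) : Prop :=
  forall (x : B) (u v : uhom x b), ucomp m u = ucomp m v -> u = v.

Definition is_upullback (p a b c : B) (f : uhom a c) (g : uhom b c)
    (pa : uhom p a) (pb : uhom p b) : Prop :=
  ucomp f pa = ucomp g pb /\
  forall (q : B) (qa : uhom q a) (qb : uhom q b), ucomp f qa = ucomp g qb ->
    exists! u : uhom q p, ucomp pa u = qa /\ ucomp pb u = qb.

(** Intersection (wide pullback in B_0) of a family [ms i : bs i -> c],
    indexed by an arbitrary type [I] (class-indexed), with cone [ps], [p]. *)
Definition is_intersection (I : Type) (bs : I -> B) (c : B)
    (ms : forall i, uhom (bs i) c) (p0 : B) (ps : forall i, uhom p0 (bs i))
    (p : uhom p0 c) : Prop :=
  (forall i, ucomp (ms i) (ps i) = p) /\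
  forall (q : B) (qs : forall i, uhom q (bs i)) (qm : uhom q c),
    (forall i, ucomp (ms i) (qs i) = qm) ->
    exists! u : uhom q p0, (forall i, ucomp (ps i) u = qs i) /\ ucomp p u = qm.

Definition MorClass : Type := forall a b : B, uhom a b -> Prop.

Definition orth (a1 a2 b1 b2 : B) (e : uhom a1 a2) (m : uhom b1 b2) : Prop :=
  forall (u : uhom a1 b1) (v : uhom a2 b2), ucomp m u = ucomp v e ->
    exists! w : uhom a2 b1, ucomp w e = u /\ ucomp m w = v.

Definition vorth (a1 a2 b1 b2 : B) (e : uhom a1 a2) (m : uhom b1 b2) : Prop :=
  is_pullback (postm a1 m) (prem e b2) (prem e b1) (postm a2 m).

Definition up (M : MorClass) : MorClass :=
  fun a1 a2 e => forall b1 b2 (m : uhom b1 b2), M b1 b2 m -> orth e m.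
Definition upV (M : MorClass) : MorClass :=
  fun a1 a2 e => forall b1 b2 (m : uhom b1 b2), M b1 b2 m -> vorth e m.
Definition downV (E : MorClass) : MorClass :=
  fun b1 b2 m => forall a1 a2 (e : uhom a1 a2), E a1 a2 e -> vorth e m.

Definition is_VFS (E M : MorClass) : Prop :=
  (forall a b (m : uhom a b), downV E m <-> M a b m) /\
  (forall a b (e : uhom a b), upV M e <-> E a b e) /\
  (forall a b (f : uhom a b), exists (c : B) (e : uhom a c) (m : uhom c b),
      E a c e /\ M c b m /\ ucomp m e = f).

End Underlying.

Definition cot_comparison (V : SMCC) (B : VCat V) (X : V) (P c : B)
    (cu : hom X (vhom P c)) (a : B) : hom (vhom a P) (ihom X (vhom a c)) :=
  cur (vcomp a P c ∘ tenm cu (idm _) ∘ sym (vhom a P) X).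

Record Cotensors (V : SMCC) (B : VCat V) : Type := {
  cot : V -> B -> B;
  cot_c : forall (X : V) (c : B), hom X (vhom (cot X c) c);
  cot_univ : forall (X : V) (c a : B), is_iso (cot_comparison (cot_c X c) a) }.
Arguments cot {_ _} _ _ _.
Arguments cot_c {_ _} _ _ _.

(** [f] is the morphism [X,m] : [X,c1] -> [X,c2] induced by [m : c1 -> c2],
    i.e. it corresponds under the cotensor isomorphism to
    X --cu--> B([X,c1],c1) --B([X,c1],m)--> B([X,c1],c2). *)
Definition is_cot_map (V : SMCC) (B : VCat V) (T : Cotensors B) (X : V)
    (c1 c2 : B) (m : uhom c1 c2) (f : uhom (cot T X c1) (cot T X c2)) : Prop :=
  cot_comparison (cot_c T X c2) (cot T X c1) ∘ f
  = cur (postm (cot T X c1) m ∘ cot_c T X c1 ∘ lu X).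
Arguments is_cot_map {V B} T X {c1 c2} m f.

(* Main.v *)
Require Import Defs.
From Stdlib Require Import Setoid Morphisms.

Lemma postc {C:Cat} {a b c : C} (x : hom a b) (f g : hom b c) : f = g -> f ∘ x = g ∘ x.
Proof. intros ->; reflexivity. Qed.

Lemma cancel_r {C:Cat} {a b c : C} (f g : hom b c) (k : hom a b) (k' : hom b a) :
  k ∘ k' = idm b -> f ∘ k = g ∘ k -> f = g.
Proof. intros H E. rewrite <- (cmp_idr f), <- (cmp_idr g), <- H, !cmp_assoc, E. reflexivity. Qed.
Lemma cancel_l {C:Cat} {a b c : C} (f g : hom a b) (k : hom b c) (k' : hom c b) :
  k' ∘ k = idm b -> k ∘ f = k ∘ g -> f = g.
Proof. intros H E. rewrite <- (cmp_idl f), <- (cmp_idl g), <- H, <- !cmp_assoc, E. reflexivity. Qed.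

Ltac ra := repeat rewrite <- cmp_assoc.
Ltac ral H := repeat rewrite <- cmp_assoc in H.
(* rewrite with equation H anywhere in a right-associated goal *)
Ltac rw H :=
  let H' := fresh in
  pose proof (fun d x => @postc _ d _ _ x _ _ H) as H';
  simpl in H'; setoid_rewrite <- cmp_assoc in H';
  first [ rewrite H' | (let H2 := fresh in pose proof H as H2; ral H2; rewrite H2; clear H2) ];
  clear H'; ra.
Ltac rwl H :=
  let H' := fresh in
  pose proof (fun d x => @postc _ d _ _ x _ _ (eq_sym H)) as H';
  simpl in H'; setoid_rewrite <- cmp_assoc in H';
  first [ rewrite H' | (let H2 := fresh in pose proof (eq_sym H) as H2; ral H2; rewrite H2; clear H2) ];
  clear H'; ra.

Section Coh.
Context {V : SMCC}.

Lemma tl {a b c e : V} (f : hom a b) (g : hom b c) : tenm (idm e) (g ∘ f) = tenm (idm e) g ∘ tenm (idm e) f.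
Proof. rewrite <- tenm_cmp, cmp_idl. reflexivity. Qed.
Lemma tr {a b c e : V} (f : hom a b) (g : hom b c) : tenm (g ∘ f) (idm e) = tenm g (idm e) ∘ tenm f (idm e).
Proof. rewrite <- tenm_cmp, cmp_idl. reflexivity. Qed.
Lemma tsplit {a b c d : V} (f : hom a b) (g : hom c d) : tenm f g = tenm f (idm d) ∘ tenm (idm a) g.
Proof. rewrite <- tenm_cmp, cmp_idl, cmp_idr. reflexivity. Qed.
Lemma tsplit' {a b c d : V} (f : hom a b) (g : hom c d) : tenm f g = tenm (idm b) g ∘ tenm f (idm c).
Proof. rewrite <- tenm_cmp, cmp_idl, cmp_idr. reflexivity. Qed.

Lemma lu_inv_nat {a b : V} (f : hom a b) : lu_inv b ∘ f = tenm (idm un) f ∘ lu_inv a.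
Proof.
  rewrite <- (cmp_idr (lu_inv b ∘ f)), <- (lu_iso2 a).
  ra. rw (eq_sym (lu_nat f)). rw (lu_iso1 b). apply cmp_idl.
Qed.
Lemma ru_inv_nat {a b : V} (f : hom a b) : ru_inv b ∘ f = tenm f (idm un) ∘ ru_inv a.
Proof.
  rewrite <- (cmp_idr (ru_inv b ∘ f)), <- (ru_iso2 a).
  ra. rw (eq_sym (ru_nat f)). rw (ru_iso1 b). apply cmp_idl.
Qed.
Lemma faith_l {a b : V} (f g : hom a b) : tenm (idm un) f = tenm (idm un) g -> f = g.
Proof.
  intro H. rewrite <- (cmp_idr f), <- (cmp_idr g), <- (lu_iso2 a).
  ra. rw (eq_sym (lu_nat f)). rw (eq_sym (lu_nat g)). rewrite H. reflexivity.
Qed.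
Lemma faith_r {a b : V} (f g : hom a b) : tenm f (idm un) = tenm g (idm un) -> f = g.
Proof.
  intro H. rewrite <- (cmp_idr f), <- (cmp_idr g), <- (ru_iso2 a).
  ra. rw (eq_sym (ru_nat f)). rw (eq_sym (ru_nat g)). rewrite H. reflexivity.
Qed.

Lemma F1 (a b : V) : lu (ten a b) ∘ asc un a b = tenm (lu a) (idm b).
Proof.
  apply faith_l.
  assert (E: tenm (idm un) (lu (ten a b) ∘ asc un a b) ∘ (asc un (ten un a) b ∘ tenm (asc un un a) (idm b)) = tenm (idm un) (tenm (lu a) (idm b)) ∘ (asc un (ten un a) b ∘ tenm (asc un un a) (idm b))).
  { rewrite tl. ra. rw (pentagon un un a b). rw (triangle un (ten a b)).
    rewrite <- (tenm_id a b). rwl (asc_nat (ru un) (idm a) (idm b)).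
    rewrite <- (triangle un a). rewrite tr. ra.
    rwl (asc_nat (idm un) (lu a) (idm b)). reflexivity. }
  eapply cancel_r; [|exact E].
  assert (HK : (asc un (ten un a) b ∘ tenm (asc un un a) (idm b)) ∘ (tenm (asc_inv un un a) (idm b) ∘ asc_inv un (ten un a) b) = idm _).
  { ra. rwl (@tr _ _ _ b (asc_inv un un a) (asc un un a)). rewrite asc_iso2, tenm_id, cmp_idl. apply asc_iso2. }
  exact HK.
Qed.
Lemma lu_unun : tenm (idm un) (lu (@un V)) = lu (ten un un).
Proof.
  eapply cancel_l; [apply (lu_iso1 un)|]. rewrite lu_nat. reflexivity.
Qed.
Lemma ru_tenun (x : V) : tenm (ru x) (idm un) = ru (ten x un).
Proof.
  eapply cancel_l; [apply (ru_iso1 x)|]. rewrite ru_nat. reflexivity.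
Qed.
Lemma F2 : lu (@un V) = ru un.
Proof.
  apply faith_r. rewrite <- F1, <- triangle, lu_unun. reflexivity.
Qed.
Lemma F4 (x : V) : tenm (idm x) (lu un) ∘ asc x un un = ru (ten x un).
Proof. rewrite triangle. apply ru_tenun. Qed.
Lemma F3 (a : V) : ru a = lu a ∘ sym a un.
Proof.
  apply faith_r.
  eapply cancel_l; [apply (sym_inv a un)|].
  rewrite <- triangle. ra. rw (sym_nat (idm a) (lu un)).
  rwl (F1 un a). rw (hexagon a un un). rw (lu_nat (sym a un)). rw (F1 a un).
  rewrite tr. reflexivity.
Qed.
Lemma F3' (a : V) : lu a = ru a ∘ sym un a.
Proof. rewrite F3. ra. rewrite sym_inv, cmp_idr. reflexivity. Qed.
End Coh.

Section U.
Context {V : SMCC} {B : VCat V}.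

Lemma tcl {a b c d e : V} (h : hom d e) (g : hom b c) (f : hom a b) : tenm h (g ∘ f) = tenm (idm e) g ∘ tenm h f.
Proof. rewrite <- tenm_cmp, cmp_idl. reflexivity. Qed.
Lemma tcr {a b c d e : V} (h : hom d e) (g : hom b c) (f : hom a b) : tenm (g ∘ f) h = tenm g (idm e) ∘ tenm f h.
Proof. rewrite <- tenm_cmp, cmp_idl. reflexivity. Qed.
Lemma tcl' {a b c d e : V} (h : hom d e) (g : hom b c) (f : hom a b) : tenm h (g ∘ f) = tenm h g ∘ tenm (idm d) f.
Proof. rewrite <- tenm_cmp, cmp_idr. reflexivity. Qed.
Lemma tcr' {a b c d e : V} (h : hom d e) (g : hom b c) (f : hom a b) : tenm (g ∘ f) h = tenm g h ∘ tenm f (idm d).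
Proof. rewrite <- tenm_cmp, cmp_idr. reflexivity. Qed.

Lemma asc_F1 (a b : V) : asc un a b = lu_inv (ten a b) ∘ tenm (lu a) (idm b).
Proof. rewrite <- F1, cmp_assoc, lu_iso1, cmp_idl. reflexivity. Qed.

Lemma K1 : asc (@un V) un un ∘ (tenm (lu_inv un) (idm un) ∘ lu_inv un) = tenm (idm un) (lu_inv un) ∘ lu_inv un.
Proof.
  rewrite asc_F1. ra. rwl (@tr V _ _ _ un (lu_inv (@un V)) (lu un)). rewrite lu_iso2, tenm_id, cmp_idl.
  rewrite lu_inv_nat. reflexivity.
Qed.

Lemma ucomp_assoc (a b c d : B) (h : uhom c d) (g : uhom b c) (f : uhom a b) :
  ucomp h (ucomp g f) = ucomp (ucomp h g) f.
Proof.
  unfold ucomp. ra.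
  rewrite (tcl h (vcomp a b c)), (tcl' h (tenm g f)).
  rewrite (tcr f (vcomp b c d)), (tcr' f (tenm h g)). ra.
  rw (vassoc a b c d). rw (asc_nat h g f). rewrite K1. reflexivity.
Qed.

Lemma ucomp_idl (a b : B) (f : uhom a b) : ucomp (uid b) f = f.
Proof.
  unfold ucomp, uid. rewrite tsplit. ra. rw (vunit_l a b). rw (lu_nat f).
  rewrite lu_iso2, cmp_idr. reflexivity.
Qed.
Lemma ucomp_idr (a b : B) (f : uhom a b) : ucomp f (uid a) = f.
Proof.
  unfold ucomp, uid. rewrite tsplit'. ra. rw (vunit_r a b). rw (ru_nat f).
  rewrite <- F2, lu_iso2, cmp_idr. reflexivity.
Qed.
Lemma ru_lu_inv : ru_inv (@un V) = lu_inv un.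
Proof. rewrite <- (cmp_idr (ru_inv un)), <- (lu_iso2 un), F2, cmp_assoc, ru_iso1, cmp_idl. reflexivity. Qed.

Lemma F4i (x : V) : asc x un un ∘ ru_inv (ten x un) = tenm (idm x) (lu_inv un).
Proof.
  eapply cancel_l with (k := tenm (idm x) (lu un)) (k' := tenm (idm x) (lu_inv un)).
  - rewrite <- tl, lu_iso1, tenm_id. reflexivity.
  - rewrite cmp_assoc, F4, ru_iso2, <- tl, lu_iso2, tenm_id. reflexivity.
Qed.

Lemma K2 (x : V) : lu_inv (ten x un) ∘ ru_inv x = asc un x un ∘ (ru_inv (ten un x) ∘ lu_inv x).
Proof.
  rewrite asc_F1. ra. rwl (ru_inv_nat (lu x)). rewrite lu_iso2, cmp_idr. reflexivity.
Qed.

Lemma P0a (a b1 b2 : B) (m : uhom b1 b2) (u : uhom a b1) : postm a m ∘ u = ucomp m u.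
Proof. unfold postm, ucomp. ra. rw (lu_inv_nat u). rwl (tsplit m u). reflexivity. Qed.

Lemma P0b (a1 a2 b : B) (e : uhom a1 a2) (g : uhom a2 b) : prem e b ∘ g = ucomp g e.
Proof. unfold prem, ucomp. ra. rw (ru_inv_nat g). rwl (tsplit' g e). rewrite ru_lu_inv. reflexivity. Qed.

Lemma P1 (a' a c b : B) (g : uhom a c) (f : uhom a' a) : prem (ucomp g f) b = prem f b ∘ prem g b.
Proof.
  unfold prem, ucomp. ra.
  rewrite (tl _ (vcomp a' a c)), (tl _ (tenm g f)). ra.
  rw (ru_inv_nat (vcomp a c b)). rwl (tsplit' (vcomp a c b) f).
  rw (ru_inv_nat (tenm (idm (vhom c b)) g)).
  rewrite (tsplit (vcomp a c b) f). ra.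
  rwl (tsplit' (tenm (idm (vhom c b)) g) f).
  rw (vassoc a' a c b). rw (asc_nat (idm (vhom c b)) g f). rw (F4i (vhom c b)).
  reflexivity.
Qed.

Lemma P2 (a1 a2 b1 b2 : B) (e : uhom a1 a2) (m : uhom b1 b2) :
  postm a1 m ∘ prem e b1 = prem e b2 ∘ postm a2 m.
Proof.
  unfold prem, postm. ra.
  rw (lu_inv_nat (vcomp a1 a2 b1)). rwl (tsplit m (vcomp a1 a2 b1)).
  rewrite (tsplit' m (vcomp a1 a2 b1)). ra.
  rw (lu_inv_nat (tenm (idm (vhom a2 b1)) e)). rwl (tsplit m (tenm (idm (vhom a2 b1)) e)).
  rw (ru_inv_nat (vcomp a2 b1 b2)). rwl (tsplit' (vcomp a2 b1 b2) e).
  rewrite (tsplit (vcomp a2 b1 b2) e). ra.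
  rw (ru_inv_nat (tenm m (idm (vhom a2 b1)))). rwl (tsplit' (tenm m (idm (vhom a2 b1))) e).
  rw (vassoc a1 a2 b1 b2). rw (asc_nat m (idm (vhom a2 b1)) e).
  rewrite K2. reflexivity.
Qed.
End U.

Section Cot.
Context {V : SMCC} {B : VCat V} (T : Cotensors B).

Lemma sym_lu_inv (x : V) : sym un x ∘ lu_inv x = ru_inv x.
Proof.
  rewrite <- (cmp_idl (sym un x ∘ lu_inv x)), <- (ru_iso1 x). ra.
  rw (eq_sym (F3' x)). rewrite lu_iso2, cmp_idr. reflexivity.
Qed.

Lemma Tr_eq (X : V) (a b : B) (h : uhom a (cot T X b)) :
  ev _ _ ∘ tenm (cot_comparison (cot_c T X b) a ∘ h) (idm X) ∘ lu_inv X = prem h b ∘ cot_c T X b.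
Proof.
  unfold cot_comparison, prem. ra. rewrite (tr h). ra. rw (ev_cur (vcomp a (cot T X b) b ∘ (tenm (cot_c T X b) (idm (vhom a (cot T X b))) ∘ sym (vhom a (cot T X b)) X))).
  rw (sym_nat h (idm X)). rwl (tsplit (cot_c T X b) h). rewrite sym_lu_inv.
  rw (ru_inv_nat (cot_c T X b)). rwl (tsplit' (cot_c T X b) h). reflexivity.
Qed.

Lemma Tr_inj (X : V) (a b : B) (h h' : uhom a (cot T X b)) :
  prem h b ∘ cot_c T X b = prem h' b ∘ cot_c T X b -> h = h'.
Proof.
  rewrite <- !Tr_eq. intro E.
  assert (E2 : ev _ _ ∘ tenm (cot_comparison (cot_c T X b) a ∘ h) (idm X) = ev _ _ ∘ tenm (cot_comparison (cot_c T X b) a ∘ h') (idm X)).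
  { eapply cancel_r; [apply (lu_iso1 X)|]. exact E. }
  assert (E3 : cot_comparison (cot_c T X b) a ∘ h = cot_comparison (cot_c T X b) a ∘ h').
  { rewrite (cur_uniq E2). symmetry. apply cur_uniq. reflexivity. }
  destruct (cot_univ T X b a) as [g [Hg1 Hg2]].
  eapply cancel_l; [exact Hg1|]. exact E3.
Qed.

Lemma Tr_surj (X : V) (a b : B) (k : hom X (vhom a b)) :
  exists h : uhom a (cot T X b), prem h b ∘ cot_c T X b = k.
Proof.
  destruct (cot_univ T X b a) as [g [Hg1 Hg2]].
  exists (g ∘ cur (k ∘ lu X)). rewrite <- Tr_eq. rewrite cmp_assoc, Hg2, cmp_idl, ev_cur.
  ra. rewrite lu_iso2, cmp_idr. reflexivity.
Qed.

Lemma cot_map_ex (X : V) (c1 c2 : B) (m : uhom c1 c2) :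
  exists f, is_cot_map T X m f.
Proof.
  destruct (cot_univ T X c2 (cot T X c1)) as [g [Hg1 Hg2]].
  exists (g ∘ cur (postm (cot T X c1) m ∘ cot_c T X c1 ∘ lu X)).
  unfold is_cot_map. rewrite cmp_assoc, Hg2, cmp_idl. reflexivity.
Qed.

Lemma cot_map_Tr (X : V) (c1 c2 : B) (m : uhom c1 c2) f :
  is_cot_map T X m f -> prem f c2 ∘ cot_c T X c2 = postm (cot T X c1) m ∘ cot_c T X c1.
Proof.
  unfold is_cot_map. intro H. rewrite <- Tr_eq, H, ev_cur. ra. rewrite lu_iso2, cmp_idr. reflexivity.
Qed.

Arguments cot_map_Tr {X c1 c2 m f} _.
Lemma Tr_post (X : V) (a c1 c2 : B) (m : uhom c1 c2) f (g : uhom a (cot T X c1)) :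
  is_cot_map T X m f ->
  prem (ucomp f g) c2 ∘ cot_c T X c2 = postm a m ∘ (prem g c1 ∘ cot_c T X c1).
Proof.
  intro H. rewrite P1. ra. rewrite (cot_map_Tr H). rewrite !cmp_assoc, P2. reflexivity.
Qed.

Arguments Tr_post {X a c1 c2 m f} g _.
Lemma orth_vorth (a1 a2 b1 b2 : B) (e : uhom a1 a2) (m : uhom b1 b2) :
  (forall X f, is_cot_map T X m f -> orth e f) -> vorth e m.
Proof.
  intros H. unfold vorth, is_pullback. split; [apply P2|].
  intros q qa qb Hq.
  destruct (cot_map_ex q _ _ m) as [f Hf].
  destruct (Tr_surj q _ _ qa) as [ga Hga].
  destruct (Tr_surj q _ _ qb) as [gb Hgb].
  assert (Sq : ucomp f ga = ucomp gb e).
  { apply (Tr_inj q). rewrite (Tr_post _ Hf), Hga, P1. ra. rewrite Hgb. exact Hq. }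
  destruct (H q f Hf ga gb Sq) as [w [[Hw1 Hw2] Hwu]].
  exists (prem w b1 ∘ cot_c T q b1). split.
  - split.
    + rewrite cmp_assoc, <- P1, Hw1. exact Hga.
    + rewrite <- (Tr_post _ Hf), Hw2. exact Hgb.
  - intros u' [Hu1 Hu2].
    destruct (Tr_surj q _ _ u') as [w' Hw']. subst u'.
    replace w' with w; [reflexivity|]. apply Hwu. split.
    + apply (Tr_inj q). rewrite P1. ra. rewrite Hu1. exact (eq_sym Hga).
    + apply (Tr_inj q). rewrite (Tr_post _ Hf), Hu2. exact (eq_sym Hgb).
Qed.

End Cot.

Lemma vorth_orth {V : SMCC} {B : VCat V} (a1 a2 b1 b2 : B) (e : uhom a1 a2) (m : uhom b1 b2) :
  vorth e m -> orth e m.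
Proof.
  intros [Hc Hp] u v Huv.
  destruct (Hp un u v) as [w [[H1 H2] Hu]].
  { rewrite P0a, P0b. exact Huv. }
  exists w. rewrite P0b in H1. rewrite P0a in H2. split; [split; assumption|].
  intros w' [H1' H2']. apply Hu. rewrite P0b, P0a. split; assumption.
Qed.

Theorem corollary7p3 (V : SMCC) (B : VCat V) (T : Cotensors B)
  (M : MorClass B)
  (Hmono : forall (a b : B) (m : uhom a b), M a b m -> is_mono m)
  (Hint : forall (I : Type) (bs : I -> B) (c : B) (ms : forall i, uhom (bs i) c),
      (forall i, M (bs i) c (ms i)) ->
      (exists (p0 : B) (ps : forall i, uhom p0 (bs i)) (p : uhom p0 c),
          is_intersection ms ps p) /\
      (forall (p0 : B) (ps : forall i, uhom p0 (bs i)) (p : uhom p0 c),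
          is_intersection ms ps p -> M p0 c p))
  (Hpb : forall (a b c : B) (f : uhom a c) (m : uhom b c), M b c m ->
      (exists (p : B) (pa : uhom p a) (pb : uhom p b), is_upullback f m pa pb) /\
      (forall (p : B) (pa : uhom p a) (pb : uhom p b),
          is_upullback f m pa pb -> M p a pa))
  (Hcomp : forall (a b c : B) (m : uhom a b) (n : uhom b c),
      M a b m -> M b c n -> M a c (ucomp n m))
  (Hcot : forall (X : V) (c1 c2 : B) (m : uhom c1 c2)
      (f : uhom (cot T X c1) (cot T X c2)),
      M c1 c2 m -> is_cot_map T X m f -> M _ _ f) :
  (forall (a b : B) (e : uhom a b), upV M e <-> up M e) /\
  is_VFS (up M) M.
Proof.
  assert (A : forall (a b : B) (e : uhom a b), upV M e <-> up M e).
  { intros a b e. split.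
    - intros H b1 b2 m Mm. apply vorth_orth, H, Mm.
    - intros H b1 b2 m Mm. apply (orth_vorth T). intros X f Hf. apply H.
      exact (Hcot X _ _ m f Mm Hf). }
  assert (Iso : forall (a c : B) (e : uhom a c) (w : uhom c a),
             ucomp w e = uid a -> ucomp e w = uid c -> M a c e).
  { intros a c e w Hwe Hew.
    set (bs := Empty_set_rect (fun _ => vob B)).
    set (ms := fun i => Empty_set_rect (fun i => uhom (bs i) c) i).
    destruct (Hint Empty_set bs c ms (fun i => Empty_set_rect (fun i => M (bs i) c (ms i)) i)) as [_ HM].
    apply (HM a (fun i => Empty_set_rect (fun i => uhom a (bs i)) i) e).
    split; [intros []|].
    intros q qs qm _. exists (ucomp w qm). split; [split; [intros []|]|].
    - rewrite ucomp_assoc, Hew, ucomp_idl. reflexivity.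
    - intros u' [_ H]. rewrite <- H, ucomp_assoc, Hwe, ucomp_idl. reflexivity. }
  assert (B3 : forall a b (f : uhom a b), exists (c : B) (e : uhom a c) (m : uhom c b),
      up M e /\ M c b m /\ ucomp m e = f).
  { intros a b f.
    set (I := {c : B & {m : uhom c b & {g : uhom a c | M c b m /\ ucomp m g = f}}}).
    destruct (Hint I (fun i => projT1 i) b (fun i => projT1 (projT2 i))
                (fun i => proj1 (proj2_sig (projT2 (projT2 i))))) as [[p0 [ps [p Hpi]]] HM].
    pose proof (HM p0 ps p Hpi) as Mp.
    destruct Hpi as [Hcone Huniv].
    destruct (Huniv a (fun i => proj1_sig (projT2 (projT2 i))) f
                (fun i => proj2 (proj2_sig (projT2 (projT2 i))))) as [e [[He1 He2] _]].
    exists p0, e, p. split; [|split; [exact Mp|exact He2]].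
    intros b1 b2 m' Mm' u v Huv.
    destruct (Hpb _ _ _ v m' Mm') as [[P [pa [pb Hpbk]]] HMpb].
    pose proof (HMpb P pa pb Hpbk) as Mpa.
    destruct Hpbk as [Hsq Hpu].
    destruct (Hpu a e u (eq_sym Huv)) as [k [[Hk1 Hk2] _]].
    assert (Hf0 : ucomp (ucomp p pa) k = f).
    { rewrite <- ucomp_assoc, Hk1. exact He2. }
    set (i0 := existT (fun c => {m : uhom c b & {g : uhom a c | M c b m /\ ucomp m g = f}})
                 P (existT _ (ucomp p pa) (exist _ k (conj (Hcomp _ _ _ pa p Mpa Mp) Hf0))) : I).
    pose proof (Hcone i0) as Hc0. pose proof (He1 i0) as He0. simpl in Hc0, He0.
    assert (Hid : ucomp pa (ps i0) = uid p0).
    { apply (Hmono _ _ p Mp). rewrite ucomp_assoc, Hc0, ucomp_idr. reflexivity. }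
    exists (ucomp pb (ps i0)). split; [split|].
    - rewrite <- ucomp_assoc, He0. exact Hk2.
    - rewrite ucomp_assoc, <- Hsq, <- ucomp_assoc, Hid, ucomp_idr. reflexivity.
    - intros w' [_ Hw2]. apply (Hmono _ _ m' Mm').
      rewrite Hw2, ucomp_assoc, <- Hsq, <- ucomp_assoc, Hid, ucomp_idr. reflexivity. }
  split; [exact A|]. split; [|split; [intros a b e; apply A| exact B3]].
  intros a b m. split.
  - intros Hd. destruct (B3 a b m) as [c [e [m' [He [Mm' Heq]]]]].
    destruct (vorth_orth _ _ _ _ e m (Hd _ _ e He) (uid a) m') as [w [[Hw1 Hw2] _]].
    { rewrite ucomp_idr. symmetry. exact Heq. }
    assert (Hew : ucomp e w = uid c).
    { apply (Hmono _ _ m' Mm'). rewrite ucomp_assoc, Heq, Hw2, ucomp_idr. reflexivity. }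
    rewrite <- Heq. apply Hcomp; [|exact Mm']. exact (Iso _ _ e w Hw1 Hew).
  - intros Mm a1 a2 e He. apply (proj2 (A _ _ e) He). exact Mm.
Qed.
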